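(* Let $\Gamma,\alpha>0$ and $l(y)=\frac{\alpha p(y)}{\alpha+\sqrt\Gamma g(y)}$. Then $H(y)=y^3 l(y)$ is strictly increasing on $(0,\infty)$; in particular $y\,l'(y)+3l(y)>0$ for all $y>0$.
   Context: $g(x)=\coth x-\frac1x$ and $p(x)=\frac{g(x)}{x}=\frac{x\coth x-1}{x^2}$ for $x>0$. *)

(* Defs.v *)
From Stdlib Require Import Reals.
From Coquelicot Require Import Coquelicot.
Open Scope R_scope.

Definition coth (x : R) : R := cosh x / sinh x.

Definition g (x : R) : R := coth x - 1 / x.

Definition p (x : R) : R := g x / x.

Definition l (Gamma alpha : R) (y : R) : R :=
  alpha * p y / (alpha + sqrt Gamma * g y).

Definition H (Gamma alpha : R) (y : R) : R := y ^ 3 * l Gamma alpha y.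

(* Main.v *)
Require Import Defs.
From Stdlib Require Import Reals Lra Psatz. From Coquelicot Require Import Coquelicot.
Open Scope R_scope.
Lemma dsinh x : is_derive sinh x (cosh x).
Proof. apply is_derive_Reals, derivable_pt_lim_sinh. Qed.
Lemma dcosh x : is_derive cosh x (sinh x).
Proof. apply is_derive_Reals, derivable_pt_lim_cosh. Qed.
Lemma sinh_pos x : 0 < x -> 0 < sinh x.
Proof. intros; rewrite <- sinh_0; now apply sinh_lt. Qed.
Lemma cosh_sinh x : cosh x ^ 2 - sinh x ^ 2 = 1.
Proof. unfold cosh, sinh. rewrite exp_Ropp. assert (exp x > 0) by apply exp_pos. field. lra. Qed.
Lemma dg y : 0 < y -> is_derive g y (1 / y^2 - 1 / sinh y ^ 2).
Proof. intros Hy. assert (Hs := sinh_pos y Hy).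
 unfold g, coth. auto_derive.
 - idtac.
 - repeat split; lra.
 - pose proof (cosh_sinh y). assert (cosh y * cosh y = 1 + sinh y * sinh y) by nra.
   field_simplify; try lra. f_equal. nra.
Qed.
Lemma mono_strict f df a b : a < b ->
  (forall x, a <= x <= b -> is_derive f x (df x)) ->
  (forall x, a <= x <= b -> 0 < df x) -> f a < f b.
Proof. intros Hab Hd Hp.
 destruct (MVT_gen f a b df) as [c [Hc Heq]].
 - intros x Hx. apply Hd. rewrite Rmin_left, Rmax_right in Hx; lra.
 - intros x Hx. rewrite Rmin_left, Rmax_right in Hx; try lra.
   apply continuity_pt_filterlim. apply (ex_derive_continuous (K:=R_AbsRing) (V:=R_NormedModule)). eexists; apply Hd; lra.
 - rewrite Rmin_left, Rmax_right in Hc; try lra. specialize (Hp c Hc). nra.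
Qed.
Lemma mono_weak f df a b : a <= b ->
  (forall x, a <= x <= b -> is_derive f x (df x)) ->
  (forall x, a <= x <= b -> 0 <= df x) -> f a <= f b.
Proof. intros Hab Hd Hp. destruct (Req_dec a b) as [->|]; [lra|].
 destruct (MVT_gen f a b df) as [c [Hc Heq]].
 - intros x Hx. apply Hd. rewrite Rmin_left, Rmax_right in Hx; lra.
 - intros x Hx. rewrite Rmin_left, Rmax_right in Hx; try lra.
   apply continuity_pt_filterlim. apply (ex_derive_continuous (K:=R_AbsRing) (V:=R_NormedModule)). eexists; apply Hd; lra.
 - rewrite Rmin_left, Rmax_right in Hc; try lra. specialize (Hp c Hc). nra.
Qed.
Lemma mono0 f df b : 0 < b ->
  (forall x, 0 <= x <= b -> is_derive f x (df x)) ->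
  (forall x, 0 <= x <= b -> 0 <= df x) ->
  (forall x, 0 < x <= b -> 0 < df x) -> f 0 < f b.
Proof. intros Hb Hd H0 H1.
 apply Rle_lt_trans with (f (b/2)).
 - apply (mono_weak f df); try lra; intros; [apply Hd|apply H0]; lra.
 - apply (mono_strict f df); try lra; intros; [apply Hd|apply H1]; lra.
Qed.
Lemma cosh_gt1 x : 0 < x -> 1 < cosh x.
Proof. intros. unfold cosh. rewrite exp_Ropp. assert (1 < exp x).
 { rewrite <- exp_0. now apply exp_increasing. }
 assert (exp x * / exp x = 1) by (field; lra). assert (0 < / exp x) by (apply Rinv_0_lt_compat; lra). nra. Qed.
Lemma cosh_ge1 x : 0 <= x -> 1 <= cosh x.
Proof. intros [H|<-]. apply Rlt_le, cosh_gt1, H. rewrite cosh_0; lra. Qed.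
Lemma sinh_gt x : 0 < x -> x < sinh x.
Proof. intros Hx. pose proof (mono0 (fun t => sinh t - t) (fun t => cosh t - 1) x Hx).
 simpl in H. rewrite sinh_0 in H. assert (0 < sinh x - x); [|lra]. replace 0 with (0-0) by lra. apply H.
 - intros. auto_derive; auto. ring.
 - intros. pose proof (cosh_ge1 x0); lra.
 - intros. pose proof (cosh_gt1 x0); lra.
Qed.
Lemma xcosh_gt x : 0 < x -> sinh x < x * cosh x.
Proof. intros Hx. pose proof (mono0 (fun t => t * cosh t - sinh t) (fun t => t * sinh t) x Hx).
 simpl in H. rewrite sinh_0 in H. assert (0 < x * cosh x - sinh x); [|lra].
 replace 0 with (0 * cosh 0 - 0) by ring. apply H.
 - intros. auto_derive; auto. ring.
 - intros x0 [[H1|<-] H2]. pose proof (sinh_pos x0 H1); nra. rewrite sinh_0; lra.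
 - intros. pose proof (sinh_pos x0 (proj1 H0)); nra.
Qed.
Lemma g_pos y : 0 < y -> 0 < g y.
Proof. intros Hy. pose proof (sinh_pos y Hy). pose proof (xcosh_gt y Hy).
 unfold g, coth. apply Rmult_lt_reg_r with (y * sinh y). nra. field_simplify; lra. Qed.
Lemma dl Gamma alpha y : 0 < Gamma -> 0 < alpha -> 0 < y ->
  is_derive (l Gamma alpha) y
   (alpha * ((1 / y^2 - 1 / sinh y ^ 2) * y * (alpha + sqrt Gamma * g y)
      - g y * ((alpha + sqrt Gamma * g y) + y * sqrt Gamma * (1 / y^2 - 1 / sinh y ^ 2)))
      / (y * (alpha + sqrt Gamma * g y))^2).
Proof. intros hG ha Hy. pose proof (g_pos y Hy). pose proof (sqrt_pos Gamma).
 pose proof (dg y Hy).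
 unfold l, p. auto_derive.
 - repeat split; try (eexists; eassumption); nra.
 - change (Derive (fun x : R => g x) y) with (Derive g y). rewrite (is_derive_unique _ _ _ H1). pose proof (sinh_pos y Hy). field. repeat split; nra.
Qed.
Lemma key Gamma alpha y : 0 < Gamma -> 0 < alpha -> 0 < y ->
  y * Derive (l Gamma alpha) y + 3 * l Gamma alpha y > 0.
Proof. intros hG ha Hy. rewrite (is_derive_unique _ _ _ (dl Gamma alpha y hG ha Hy)).
 pose proof (g_pos y Hy). pose proof (sqrt_pos Gamma). pose proof (sinh_gt y Hy).
 set (D := 1 / y^2 - 1 / sinh y ^ 2).
 assert (0 <= D). { unfold D. pose proof (sinh_pos y Hy).
   assert (Hq: y^2 < sinh y ^2) by nra.
   assert (/ sinh y ^2 < / y^2) by (apply Rinv_lt_contravar; [apply Rmult_lt_0_compat; apply pow_lt; lra | exact Hq]). unfold Rdiv; rewrite !Rmult_1_l. lra. }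
 unfold l, p. set (G := g y) in *. set (s := sqrt Gamma) in *.
 assert (0 < alpha + s * G) by nra. set (P := alpha + s*G) in *.
 replace (y * (alpha * (D * y * P - G * (P + y * s * D)) / (y * P) ^ 2) +
   3 * (alpha * (G / y) / P)) with (alpha * (D * y * alpha + 2 * G * P) / (y * P^2))
   by (unfold P; field; nra).
 apply Rlt_gt, Rdiv_lt_0_compat. apply Rmult_lt_0_compat; [lra|]. assert (0 <= D*y*alpha) by (apply Rmult_le_pos; [apply Rmult_le_pos|]; lra). assert (0 < G*P) by (apply Rmult_lt_0_compat; lra). lra. apply Rmult_lt_0_compat; [lra| apply pow_lt; lra].
Qed.
Theorem mainTheorem3 (Gamma alpha : R) (hG : 0 < Gamma) (ha : 0 < alpha) :
  (forall x y : R, 0 < x -> x < y -> H Gamma alpha x < H Gamma alpha y) /\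
  (forall y : R, 0 < y ->
     ex_derive (l Gamma alpha) y /\
     y * Derive (l Gamma alpha) y + 3 * l Gamma alpha y > 0).
Proof. split.
 - intros x y Hx Hxy.
   apply (mono_strict _ (fun t => 3 * t^2 * l Gamma alpha t + t^3 * Derive (l Gamma alpha) t)); auto.
   + intros t Ht. unfold H. auto_derive.
     * eexists; apply dl; lra.
     * change (Derive (fun x0 : R => l Gamma alpha x0) t) with (Derive (l Gamma alpha) t). ring.
   + intros t Ht. pose proof (key Gamma alpha t hG ha ltac:(lra)).
     replace (3 * t ^ 2 * l Gamma alpha t + t ^ 3 * Derive (l Gamma alpha) t)
       with (t^2 * (t * Derive (l Gamma alpha) t + 3 * l Gamma alpha t)) by ring.
     apply Rmult_lt_0_compat; nra.
 - intros y Hy. split. eexists; apply dl; lra. now apply key.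
Qed.
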